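(* Let $X$ be a sofic shift, $Y$ an irreducible sofic shift, and $\phi : X \to Y$ a finite-to-one factor code. If $y$ is a doubly transitive point of $Y$, then $\phi^{-1}(y) \subset \Omega(X)$.
   Context: Shift spaces are closed shift-invariant subsets of $\mathcal{A}^{\mathbb{Z}}$; a factor code is an onto continuous shift-commuting map; finite-to-one means finite fibers. Sofic: image of a shift of finite type under a code. Irreducible: for all words $u,v$ there is $w$ with $uwv$ a word. A shift space is nonwandering if for every word $u$ there is $w$ with $uwu$ a word; $\Omega(X)$ denotes the unique maximal nonwandering subshift of $X$. A point $y$ is doubly transitive if every word of $Y$ occurs infinitely often in $y$ to the left and to the right. *)

(* Defs.v *)
From Stdlib Require Import ZArith List.
From mathcomp Require Import all_boot.
Set Implicit Arguments. Unset Strict Implicit. Unset Printing Implicit Defensive.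

Open Scope Z_scope.

Definition point (A : Type) := Z -> A.
Definition pset (A : Type) := point A -> Prop.

Definition shift (A : Type) (x : point A) : point A := fun i => x (i + 1).

Definition occurs_at (A : Type) (x : point A) (w : list A) (i : Z) : Prop :=
  forall (k : nat) (a : A), (k < size w)%N -> x (i + Z.of_nat k) = nth a w k.

Definition word_of (A : Type) (X : pset A) (w : list A) : Prop :=
  exists x i, X x /\ occurs_at x w i.

Definition agree_on (A : Type) (x x' : point A) (n : nat) : Prop :=
  forall i, - Z.of_nat n <= i <= Z.of_nat n -> x i = x' i.

(* closed in the product topology on A^Z (A discrete), unfolded: every point
   that is a limit of points of X (i.e. agrees with points of X on every
   central window) belongs to X *)
Definition closed_set (A : Type) (X : pset A) : Prop :=
  forall x, (forall n : nat, exists x', X x' /\ agree_on x x' n) -> X x.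

Definition shift_invariant (A : Type) (X : pset A) : Prop :=
  forall x, X x <-> X (shift x).

Definition shift_space (A : finType) (X : pset A) : Prop :=
  closed_set X /\ shift_invariant X.

Definition continuous_on (A B : Type) (X : pset A) (phi : point A -> point B) :=
  forall x, X x -> forall n : nat, exists m : nat,
    forall x', X x' -> agree_on x x' m -> agree_on (phi x) (phi x') n.

Definition code (A B : finType) (X : pset A) (Y : pset B)
  (phi : point A -> point B) : Prop :=
  shift_space X /\ shift_space Y /\
  (forall x, X x -> Y (phi x)) /\
  continuous_on X phi /\
  (forall x, X x -> phi (shift x) = shift (phi x)).

Definition factor_code (A B : finType) (X : pset A) (Y : pset B)
  (phi : point A -> point B) : Prop :=
  code X Y phi /\ (forall y, Y y -> exists x, X x /\ phi x = y).

Definition finite_to_one (A B : finType) (X : pset A)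
  (phi : point A -> point B) : Prop :=
  forall y, exists l : list (point A), forall x, X x -> phi x = y -> In x l.

Definition SFT (A : finType) (X : pset A) : Prop :=
  exists F : list (list A),
    forall x, X x <-> (forall w i, In w F -> ~ occurs_at x w i).

Definition sofic (A : finType) (X : pset A) : Prop :=
  exists (C : finType) (Z0 : pset C) (psi : point C -> point A),
    SFT Z0 /\ factor_code Z0 X psi.

Definition irreducible (A : finType) (X : pset A) : Prop :=
  forall u v, word_of X u -> word_of X v ->
    exists w, word_of X (u ++ w ++ v).

Definition nonwandering (A : finType) (X : pset A) : Prop :=
  forall u, word_of X u -> exists w, word_of X (u ++ w ++ u).

(* Omega(X): the maximal nonwandering subshift of X, realised as the union of
   all nonwandering subshifts of X (which equals the maximal one) *)
Definition Omega (A : finType) (X : pset A) : pset A :=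
  fun x => exists Z0 : pset A,
    shift_space Z0 /\ (forall z, Z0 z -> X z) /\ nonwandering Z0 /\ Z0 x.

Definition doubly_transitive (A : finType) (Y : pset A) (y : point A) : Prop :=
  Y y /\ forall w, word_of Y w -> forall N : Z,
    (exists i, N <= i /\ occurs_at y w i) /\
    (exists i, i <= N /\ occurs_at y w i).

(* Main.v *)
Require Import Defs.
From Stdlib Require Import ZArith List Lia FunctionalExtensionality ClassicalEpsilon Classical.
From mathcomp Require Import all_boot zify.
Import Defs.
Set Implicit Arguments. Unset Strict Implicit.
Open Scope Z_scope.

Definition shiftZ (A : Type) (t : Z) (x : point A) : point A := fun i => x (i + t).

Lemma shiftZ_add A (a b : Z) (x : point A) : shiftZ a (shiftZ b x) = shiftZ (a + b) x.
Proof. apply functional_extensionality => i; rewrite /shiftZ; f_equal; lia. Qed.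

Lemma shiftZ0 A (x : point A) : shiftZ 0 x = x.
Proof. apply functional_extensionality => i; rewrite /shiftZ; f_equal; lia. Qed.

Lemma shift_shiftZ A t (x : point A) : shift (shiftZ t x) = shiftZ (t+1) x.
Proof. apply functional_extensionality => i; rewrite /shift /shiftZ; f_equal; lia. Qed.

Lemma inv_shiftZ (A : Type) (S : pset A) : shift_invariant S ->
  forall t x, S x -> S (shiftZ t x).
Proof.
move=> HS t; induction t using Z.peano_ind => x Hx.
- by rewrite shiftZ0.
- rewrite -Z.add_1_r -shift_shiftZ; apply (proj1 (HS _)); by apply IHt.
- apply (proj2 (HS _)). rewrite shift_shiftZ. have -> : Z.pred t + 1 = t by lia. by apply IHt.
Qed.

Lemma comm_shiftZ (A B : Type) (S : pset A) (g : point A -> point B) :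
  shift_invariant S -> (forall x, S x -> g (shift x) = shift (g x)) ->
  forall t x, S x -> g (shiftZ t x) = shiftZ t (g x).
Proof.
move=> HS Hg t; induction t using Z.peano_ind => x Hx.
- by rewrite !shiftZ0.
- rewrite -Z.add_1_r -!shift_shiftZ Hg ?IHt //. by apply inv_shiftZ.
- have Hw : S (shiftZ (Z.pred t) x) by apply inv_shiftZ.
  have E := Hg _ Hw. rewrite shift_shiftZ (_ : Z.pred t + 1 = t) in E; last by lia.
  rewrite IHt // in E.
  have -> : g (shiftZ (Z.pred t) x) = shiftZ (-1) (shift (g (shiftZ (Z.pred t) x))).
    by rewrite /shift /shiftZ; apply functional_extensionality => i; f_equal; lia.
  rewrite -E shiftZ_add; f_equal; lia.
Qed.

Definition infinitely (Q : nat -> Prop) := forall J : nat, exists j, (J <= j)%N /\ Q j.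

Lemma bound_list (T : Type) (R : T -> nat -> Prop) (l : list T) :
  (forall a, In a l -> exists B, forall j, (B <= j)%N -> ~ R a j) ->
  exists B, forall a, In a l -> forall j, (B <= j)%N -> ~ R a j.
Proof.
elim: l => [|a l IH] H. by exists 0%N.
have [Ba Ha] := H a (or_introl erefl).
have [Bl Hl] := IH (fun b hb => H b (or_intror hb)).
exists (maxn Ba Bl) => b [<-|hb] j hj.
- apply Ha; apply: leq_trans hj; apply leq_maxl.
- apply (Hl b hb); apply: leq_trans hj; apply leq_maxr.
Qed.

Lemma mem_In (T : eqType) (x : T) (s : seq T) : x \in s -> In x s.
Proof.
elim: s => [|a s IH] //=. rewrite in_cons => /orP [/eqP ->|h]; [by left|by right; apply IH].
Qed.

Lemma pigeon (A : finType) (Q : nat -> Prop) (f : nat -> A) :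
  infinitely Q -> exists a, infinitely (fun j => Q j /\ f j = a).
Proof.
move=> HQ. apply NNPP => Hn.
have H1 : forall a, In a (enum A) -> exists B, forall j, (B <= j)%N -> ~ (Q j /\ f j = a).
  move=> a _. apply NNPP => Hb. apply Hn; exists a => J. apply NNPP => HJ.
  apply Hb; exists J => j hj hq. apply HJ; exists j; split => //.
have [B HB] := bound_list H1.
have [j [hj hq]] := HQ B.
apply: (HB (f j) _ j hj); last by split.
apply mem_In. by rewrite mem_enum.
Qed.

Definition chooseA (A : finType) (a0 : A) (f : nat -> point A) (Q : nat -> Prop) (c : Z) : A :=
  epsilon (inhabits a0) (fun a => infinitely (fun j => Q j /\ f j c = a)).

Fixpoint Qk (A : finType) (a0 : A) (f : nat -> point A) (k : nat) : nat -> Prop :=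
  match k with
  | 0%N => fun _ => True
  | S k' => let Q := Qk a0 f k' in
            let a := chooseA a0 f Q (Z.of_nat k') in
            let Q' := fun j => Q j /\ f j (Z.of_nat k') = a in
            let b := chooseA a0 f Q' (- Z.of_nat k') in
            fun j => Q' j /\ f j (- Z.of_nat k') = b
  end.

Definition aval (A : finType) (a0 : A) (f : nat -> point A) k :=
  chooseA a0 f (Qk a0 f k) (Z.of_nat k).
Definition bval (A : finType) (a0 : A) (f : nat -> point A) k :=
  chooseA a0 f (fun j => Qk a0 f k j /\ f j (Z.of_nat k) = aval a0 f k) (- Z.of_nat k).

Lemma Qk_S (A : finType) (a0 : A) f k j : Qk a0 f (S k) j <->
  (Qk a0 f k j /\ f j (Z.of_nat k) = aval a0 f k) /\ f j (- Z.of_nat k) = bval a0 f k.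
Proof. by []. Qed.

Lemma chooseA_spec (A : finType) (a0 : A) f Q c : infinitely Q ->
  infinitely (fun j => Q j /\ f j c = chooseA a0 f Q c).
Proof.
move=> HQ. rewrite /chooseA. apply (epsilon_spec (inhabits a0) (fun a => infinitely (fun j => Q j /\ f j c = a))).
exact: (pigeon (fun j => f j c) HQ).
Qed.

Lemma Qk_inf (A : finType) (a0 : A) f k : infinitely (Qk a0 f k).
Proof.
elim: k => [|k IH]. move=> J; by exists J.
have H1 := chooseA_spec a0 f (Z.of_nat k) IH.
have H2 := chooseA_spec a0 f (- Z.of_nat k) H1.
move=> J; have [j [hj hq]] := H2 J. exists j; split => //.
Qed.

Lemma Qk_mono (A : finType) (a0 : A) f k K j : (k <= K)%N -> Qk a0 f K j -> Qk a0 f k j.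
Proof.
elim: K => [|K IH]. by rewrite leqn0 => /eqP ->.
rewrite leq_eqVlt => /orP [/eqP -> //| hk] h.
apply IH => //. by move: h => /Qk_S [[]].
Qed.

Lemma cluster (A : finType) (Sx : pset A) : closed_set Sx ->
  forall f : nat -> point A, (forall j, Sx (f j)) ->
  exists x, Sx x /\ forall (n J : nat), exists j, (J <= j)%N /\ agree_on x (f j) n.
Proof.
move=> HS f Hf.
set a0 := f 0%N 0.
set x := fun c => if 0 <=? c then aval a0 f (Z.to_nat c) else bval a0 f (Z.to_nat (- c)).
have key : forall n J : nat, exists j, (J <= j)%N /\ agree_on x (f j) n.
  move=> n J. have [j [hj hq]] := Qk_inf a0 f (S n) J. exists j; split => //.
  move=> i hi. rewrite /x. case: (Z.leb_spec 0 i) => h0.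
  - have hk : ((Z.to_nat i).+1 <= n.+1)%N by apply/leP; lia.
    have := Qk_mono (k := (Z.to_nat i).+1) (j:=j) hk hq.
    move=> /Qk_S [[_ e] _]. by rewrite Z2Nat.id // in e.
  - have hk : ((Z.to_nat (-i)).+1 <= n.+1)%N by apply/leP; lia.
    have := Qk_mono (k := (Z.to_nat (-i)).+1) (j:=j) hk hq.
    move=> /Qk_S [_ e]. rewrite Z2Nat.id ?Z.opp_involutive in e; last lia. done.
exists x; split => //. apply HS => n. have [j [_ hj]] := key n 0%N. by exists (f j).
Qed.

Lemma UC (A B : finType) (Sx : pset A) (g : point A -> point B) :
  shift_space Sx -> continuous_on Sx g -> (forall x, Sx x -> g (shift x) = shift (g x)) ->
  exists m : nat, forall z z' i, Sx z -> Sx z' ->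
    (forall j, i - Z.of_nat m <= j <= i + Z.of_nat m -> z j = z' j) -> g z i = g z' i.
Proof.
move=> [Hcl Hinv] Hc Hg.
suff [m Hm] : exists m : nat, forall z z', Sx z -> Sx z' -> agree_on z z' m -> g z 0 = g z' 0.
  exists m => z z' i hz hz' ha.
  have e1 := comm_shiftZ Hinv Hg i hz. have e2 := comm_shiftZ Hinv Hg i hz'.
  have -> : g z i = shiftZ i (g z) 0 by rewrite /shiftZ Z.add_0_l.
  have -> : g z' i = shiftZ i (g z') 0 by rewrite /shiftZ Z.add_0_l.
  rewrite -e1 -e2. apply Hm; try by apply inv_shiftZ.
  move=> j hj; rewrite /shiftZ; apply ha; lia.
apply NNPP => Hn.
have H1 : forall m : nat, exists zz : point A * point A,
    Sx zz.1 /\ Sx zz.2 /\ agree_on zz.1 zz.2 m /\ g zz.1 0 <> g zz.2 0.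
  move=> m; apply NNPP => Hm; apply Hn; exists m => z z' hz hz' ha.
  apply NNPP => hne; apply Hm; by exists (z, z').
pose F := fun m => proj1_sig (constructive_indefinite_description _ (H1 m)).
have HF : forall m, Sx (F m).1 /\ Sx (F m).2 /\ agree_on (F m).1 (F m).2 m /\ g (F m).1 0 <> g (F m).2 0.
  move=> m; exact: (proj2_sig (constructive_indefinite_description _ (H1 m))).
pose P := fun m : nat => (fun i => ((F m).1 i, (F m).2 i)) : point (A * A)%type.
pose S2 := fun p : point (A * A)%type => Sx (fun i => (p i).1) /\ Sx (fun i => (p i).2).
have HS2 : closed_set S2.
  move=> p hp; split; apply Hcl => n; have [p' [[h1 h2] ha]] := hp n.
  - exists (fun i => (p' i).1); split => // i hi; by rewrite (ha i hi).
  - exists (fun i => (p' i).2); split => // i hi; by rewrite (ha i hi).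
have HP : forall j, S2 (P j) by move=> j; have [? [? _]] := HF j; split.
have [p [[hp1 hp2] Hp]] := cluster HS2 HP.
have Heq : (fun i => (p i).1) = (fun i => (p i).2).
  apply functional_extensionality => i.
  have [j [hj ha]] := Hp (Z.to_nat (Z.abs i)) (Z.to_nat (Z.abs i)).
  rewrite (ha i) /P /=; last lia.
  have [_ [_ [hag _]]] := HF j. apply hag.
  have : (Z.of_nat (Z.to_nat (Z.abs i)) <= Z.of_nat j) by apply inj_le; apply/leP.
  lia.
have [m0 Hm0] := Hc _ hp1 0%N.
have [j [hj ha]] := Hp m0 m0.
have [h1 [h2 [_ hne]]] := HF j.
apply hne.
have E1 := Hm0 _ h1. have E2 := Hm0 _ h2.
rewrite -(E1 _ 0) ?E2 //; try lia.
- move=> i hi. have := f_equal (fun h => h i) Heq => /= ->. rewrite (ha i hi) /P //.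
- move=> i hi. rewrite (ha i hi) /P //.
Qed.

Definition maxlen (C : Type) (Fb : list (list C)) : nat :=
  foldr (fun w acc => maxn (size w) acc) 0%N Fb.

Lemma maxlen_ge (C : Type) (Fb : list (list C)) w : In w Fb -> (size w <= maxlen Fb)%N.
Proof.
elim: Fb => [|a l IH] //= [->|h]; first by apply leq_maxl.
apply: leq_trans (IH h) _; apply leq_maxr.
Qed.

Definition splice (C : Type) (w1 w2 : point C) (g : Z) : point C :=
  fun i => if i <? g then w1 i else w2 i.

Lemma splice_SFT (C : finType) (Z0 : pset C) (Fb : list (list C)) (L : nat) :
  (forall x, Z0 x <-> (forall w i, In w Fb -> ~ occurs_at x w i)) ->
  (maxlen Fb <= L)%N ->
  forall w1 w2 g, Z0 w1 -> Z0 w2 ->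
  (forall i, g <= i < g + Z.of_nat L -> w1 i = w2 i) -> Z0 (splice w1 w2 g).
Proof.
move=> HF hL w1 w2 g h1 h2 hag. apply HF => w i hw hocc.
have hs := maxlen_ge hw.
case: (Z.leb_spec g i) => hgi.
- apply (proj1 (HF _) h2 w i hw) => k a hk. rewrite -(hocc k a hk) /splice.
  case: (Z.ltb_spec (i + Z.of_nat k) g) => //; lia.
- apply (proj1 (HF _) h1 w i hw) => k a hk. rewrite -(hocc k a hk) /splice.
  case: (Z.ltb_spec (i + Z.of_nat k) g) => // hik. apply hag.
  have : (Z.of_nat k < Z.of_nat L).
    apply inj_lt; apply/ltP; apply: leq_trans hk (leq_trans hs hL).
  lia.
Qed.

Definition local (C D : Type) (Z0 : pset C) (G : point C -> point D) (m : nat) :=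
  forall z z' i, Z0 z -> Z0 z' ->
    (forall j, i - Z.of_nat m <= j <= i + Z.of_nat m -> z j = z' j) -> G z i = G z' i.

Lemma splice_left (C D : Type) (Z0 : pset C) (G : point C -> point D) (m L : nat) w1 w2 g i :
  local Z0 G m -> Z0 (splice w1 w2 g) -> Z0 w1 -> (2 * m + 1 <= L)%N ->
  (forall i, g <= i < g + Z.of_nat L -> w1 i = w2 i) ->
  i <= g + Z.of_nat m -> G (splice w1 w2 g) i = G w1 i.
Proof.
move=> hl hs h1 hL hag hi. apply hl => // j hj. rewrite /splice.
case: (Z.ltb_spec j g) => // hjg. symmetry; apply hag.
have : (Z.of_nat (2 * m + 1) <= Z.of_nat L) by apply inj_le; apply/leP.
rewrite Nat2Z.inj_add Nat2Z.inj_mul. lia.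
Qed.

Lemma splice_right (C D : Type) (Z0 : pset C) (G : point C -> point D) (m : nat) w1 w2 g i :
  local Z0 G m -> Z0 (splice w1 w2 g) -> Z0 w2 ->
  g + Z.of_nat m <= i -> G (splice w1 w2 g) i = G w2 i.
Proof.
move=> hl hs h2 hi. apply hl => // j hj. rewrite /splice.
case: (Z.ltb_spec j g) => // hjg. lia.
Qed.

Definition st (C : Type) (L : nat) (z : point C) (q : Z) : seq C :=
  [seq z (q + Z.of_nat k) | k <- iota 0 L].

Lemma size_st (C : Type) L (z : point C) q : size (st L z q) = L.
Proof. by rewrite /st size_map size_iota. Qed.

Lemma st_agree (C : Type) L (z z' : point C) q : st L z q = st L z' q ->
  forall i, q <= i < q + Z.of_nat L -> z i = z' i.
Proof.
move=> E i hi.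
have hk : (Z.to_nat (i - q) < L)%N by apply/ltP; lia.
have := f_equal (fun s => nth (z q) s (Z.to_nat (i - q))) E.
rewrite /st !(nth_map 0%N) ?size_iota // nth_iota // add0n Z2Nat.id; last lia.
by have -> : q + (i - q) = i by lia.
Qed.

Lemma agree_st (C : Type) L (z z' : point C) q :
  (forall i, q <= i < q + Z.of_nat L -> z i = z' i) -> st L z q = st L z' q.
Proof.
move=> h. rewrite /st; apply eq_in_map => k; rewrite mem_iota add0n => hk.
apply h. have : (Z.of_nat k < Z.of_nat L) by apply inj_lt; apply/ltP. lia.
Qed.

Fixpoint allw (C : finType) (n : nat) : seq (seq C) :=
  match n with
  | 0%N => [:: [::]]
  | S n' => [seq c :: s | c <- enum C, s <- allw C n']
  end.

Lemma allw_mem (C : finType) (n : nat) (s : seq C) : size s = n -> s \in allw C n.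
Proof.
elim: n s => [|n IH] [|c s] //= h.
apply (allpairs_f (fun c s => c :: s)); first by rewrite mem_enum.
apply IH. by case: h.
Qed.

Definition pb (P : Prop) : bool := if excluded_middle_informative P then true else false.

Lemma pbP (P : Prop) : pb P <-> P.
Proof. rewrite /pb; case: excluded_middle_informative => //. Qed.

Lemma count_eq_sub (T : eqType) (p q : pred T) (s : seq T) :
  (forall x, p x -> q x) -> (count q s <= count p s)%N ->
  forall x, x \in s -> q x -> p x.
Proof.
move=> hpq; elim: s => [|a s IH] //= hc x.
have hs := sub_count hpq s.
rewrite in_cons => /orP [/eqP ->|hx] hqx.
- move: hc; case pa: (p a) => //; case qa: (q a) => //=; last by rewrite qa in hqx.
  rewrite add0n add1n => hc. have := leq_trans hc hs. by rewrite ltnn.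
- apply IH => //. move: hc; case pa: (p a); case qa: (q a) => //=.
  + by rewrite (hpq _ pa) in qa.
  + rewrite add0n add1n => hc; exact: ltnW.
Qed.

Definition Sset (B C : Type) (Z0 : pset C) (Phi : point C -> point B) (y : point B) (L : nat)
  (Wd : nat -> Z -> Z -> Prop) (N : nat) (q : Z) (s : seq C) :=
  exists w, Z0 w /\ (forall i, Wd N q i -> Phi w i = y i) /\ st L w q = s.

Definition SsetI (B C : Type) (Z0 : pset C) (Phi : point C -> point B) (y : point B) (L : nat)
  (Winf : Z -> Z -> Prop) (q : Z) (s : seq C) :=
  exists w, Z0 w /\ (forall i, Winf q i -> Phi w i = y i) /\ st L w q = s.

Lemma st_shiftZ (C : Type) L (w : point C) u q : st L (shiftZ u w) q = st L w (q + u).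
Proof. rewrite /st; apply eq_map => k; rewrite /shiftZ; f_equal; lia. Qed.

Lemma pb_ext (P Q : Prop) : (P <-> Q) -> pb P = pb Q.
Proof. rewrite /pb => h; do 2 case: excluded_middle_informative => //; intros; exfalso; tauto. Qed.

Lemma exists_min (T : Type) (f : T -> nat) (t0 : T) : exists t, forall t', (f t <= f t')%N.
Proof.
suff H : forall k t, (f t <= k)%N -> exists t, forall t', (f t <= f t')%N by exact: (H _ t0 (leqnn _)).
elim => [|k IH] t ht.
- exists t => t'. by move: ht; rewrite leqn0 => /eqP ->.
- case: (classic (exists t', (f t' < f t)%N)) => [[t' ht']|hn].
  + apply (IH t'). by rewrite -ltnS; apply: leq_trans ht' ht.
  + exists t => t'. rewrite leqNgt; apply/negP => h; apply hn; by exists t'.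
Qed.

Lemma sync (B C : finType) (Z0 : pset C) (Phi : point C -> point B) (y : point B) (L m : nat)
  (Wd : nat -> Z -> Z -> Prop) (Winf : Z -> Z -> Prop) :
  shift_space Z0 -> local Z0 Phi m ->
  (forall t z, Z0 z -> Phi (shiftZ t z) = shiftZ t (Phi z)) ->
  (forall N N' q i, (N <= N')%N -> Wd N q i -> Wd N' q i) ->
  (forall N q t i, Wd N (q + t) i <-> Wd N q (i - t)) ->
  (forall q i, Winf q i -> exists N, Wd N q i) ->
  exists N1 q1, forall q, (forall i, Wd N1 q1 i -> y (i + (q - q1)) = y i) ->
    forall s, Sset Z0 Phi y L Wd N1 q s -> SsetI Z0 Phi y L Winf q s.
Proof.
move=> [Hcl Hinv] Hloc Hcomm Hmono Htr Hexh.
have Smono : forall N N' q s, (N <= N')%N -> Sset Z0 Phi y L Wd N' q s -> Sset Z0 Phi y L Wd N q s.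
  move=> N N' q s hN [w [hw [hp hs]]]. exists w; split => //; split => // i hi.
  apply hp; exact: Hmono hN hi.
have Strans : forall N q t s, (forall i, Wd N q i -> y (i + t) = y i) ->
    Sset Z0 Phi y L Wd N q s -> Sset Z0 Phi y L Wd N (q + t) s.
  move=> N q t s hy [w [hw [hp hs]]]. exists (shiftZ (-t) w); split; first by apply inv_shiftZ.
  split.
  - move=> i hi. rewrite Hcomm // /shiftZ.
    have hi' : Wd N q (i - t) by apply Htr.
    rewrite (_ : i + -t = i - t); last lia. rewrite hp //.
    have e := hy _ hi'; rewrite Z.sub_add in e; by rewrite e.
  - by rewrite -hs st_shiftZ (_ : q + t + -t = q); last lia.
have Strans' : forall N q t s, (forall i, Wd N q i -> y (i + t) = y i) ->
    Sset Z0 Phi y L Wd N (q + t) s -> Sset Z0 Phi y L Wd N q s.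
  move=> N q t s hy [w [hw [hp hs]]]. exists (shiftZ t w); split; first by apply inv_shiftZ.
  split.
  - move=> i hi. rewrite Hcomm // /shiftZ. rewrite hp; first by apply hy.
    rewrite Htr. by rewrite Z.add_simpl_r.
  - by rewrite -hs st_shiftZ.
pose cnt := fun p : nat * Z => count (fun s => pb (Sset Z0 Phi y L Wd p.1 p.2 s)) (allw C L).
have [[N1 q1] Hmin] := exists_min cnt (0%N, 0).
exists N1, q1 => q hq s hs.
have E : forall s, Sset Z0 Phi y L Wd N1 q s <-> Sset Z0 Phi y L Wd N1 q1 s.
  move=> s'; split => h.
  - apply (Strans' _ _ (q - q1)) => //. by rewrite (_ : q1 + (q - q1) = q); last lia.
  - have := Strans _ _ _ _ hq h. by rewrite (_ : q1 + (q - q1) = q); last lia.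
have hsz : s \in allw C L.
  apply allw_mem. case: hs => w [_ [_ <-]]; apply size_st.
have Hall : forall N, Sset Z0 Phi y L Wd N q s.
  move=> N. case: (leqP N1 N) => hN.
  - have hsub : forall s', pb (Sset Z0 Phi y L Wd N q s') -> pb (Sset Z0 Phi y L Wd N1 q s').
      move=> s' /pbP h; apply/pbP; exact: Smono hN h.
    have hc : (count (fun s => pb (Sset Z0 Phi y L Wd N1 q s)) (allw C L) <=
               count (fun s => pb (Sset Z0 Phi y L Wd N q s)) (allw C L))%N.
      have -> : count (fun s => pb (Sset Z0 Phi y L Wd N1 q s)) (allw C L) = cnt (N1, q1).
        rewrite /cnt /=. apply eq_count => s'. by apply pb_ext.
      exact: (Hmin (N, q)).
    apply/pbP. apply: (count_eq_sub hsub hc) => //. by apply/pbP.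
  - apply (Smono _ N1) => //. exact: ltnW.
pose F := fun N : nat => proj1_sig (constructive_indefinite_description _ (Hall N)).
have HF : forall N, Z0 (F N) /\ (forall i, Wd N q i -> Phi (F N) i = y i) /\ st L (F N) q = s.
  move=> N. exact: (proj2_sig (constructive_indefinite_description _ (Hall N))).
have [w [hw Hw]] := cluster Hcl (fun N => proj1 (HF N)).
exists w; split => //; split.
- move=> i hi. have [N0 hN0] := Hexh _ _ hi.
  have [j [hj ha]] := Hw (Z.to_nat (Z.abs i + Z.of_nat m)) N0.
  have [hFj [hp _]] := HF j.
  rewrite -(hp i); last exact: Hmono hj hN0.
  apply Hloc => // k hk. apply ha. lia.
- have [j [_ ha]] := Hw (Z.to_nat (Z.abs q + Z.of_nat L)) 0%N.
  have [_ [_ hs']] := HF j. rewrite -hs'. apply agree_st => i hi. apply ha. lia.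
Qed.

Lemma local_mono (C D : Type) (Z0 : pset C) (G : point C -> point D) m m' :
  local Z0 G m -> (m <= m')%N -> local Z0 G m'.
Proof.
move=> hl hm z z' i hz hz' ha. apply hl => // j hj. apply ha.
have : (Z.of_nat m <= Z.of_nat m') by apply inj_le; apply/leP. lia.
Qed.

Lemma dt_rec (B : finType) (Y : pset B) (y : point B) : doubly_transitive Y y ->
  forall lo hi T,
  (exists t, T <= t /\ forall i, lo <= i <= hi -> y (i + t) = y i) /\
  (exists t, t <= T /\ forall i, lo <= i <= hi -> y (i + t) = y i).
Proof.
move=> [hY hdt] lo hi T.
pose W := [seq y (lo + Z.of_nat k) | k <- iota 0 (Z.to_nat (hi - lo + 1))].
have hW : word_of Y W.
  exists y, lo; split => // k a hk.
  have hk' : (k < Z.to_nat (hi - lo + 1))%N by rewrite /W size_map size_iota in hk.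
  by rewrite /W (nth_map 0%N) ?size_iota // nth_iota.
have conv : forall i0, occurs_at y W i0 -> forall i, lo <= i <= hi -> y (i + (i0 - lo)) = y i.
  move=> i0 hocc i hi'.
  have hk : (Z.to_nat (i - lo) < size W)%N by rewrite /W size_map size_iota; apply/ltP; lia.
  have hk' : (Z.to_nat (i - lo) < Z.to_nat (hi - lo + 1))%N by rewrite /W size_map size_iota in hk.
  have := hocc _ (y i) hk. rewrite /W (nth_map 0%N) ?size_iota // nth_iota //.
  rewrite add0n Z2Nat.id; last lia.
  rewrite (_ : lo + (i - lo) = i); last lia. rewrite (_ : i0 + (i - lo) = i + (i0 - lo)) //; lia.
have [[i1 [h1 o1]] [i2 [h2 o2]]] := hdt W hW (T + lo).
split.
- exists (i1 - lo); split; [lia | exact: conv].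
- exists (i2 - lo); split; [lia | exact: conv].
Qed.

Lemma REC (A B : finType) (X : pset A) (Y : pset B) (phi : point A -> point B) :
  sofic X -> factor_code X Y phi ->
  forall y, doubly_transitive Y y -> forall x1, X x1 -> phi x1 = y ->
  forall n T : Z, exists t, T <= t /\ exists x', X x' /\ phi x' = y /\
    forall j, -n <= j <= n -> x' (t + j) = x1 j.
Proof.
move=> [C [Z0 [psi [[Fb HF] [[Hz0sp [_ [Hmap [Hcont Hcomm]]]] Honto]]]]].
move=> [[HXsp [HYsp [HmapY [HcontY HcommY]]]] _] y hy x1 hx1 hxy n T.
pose Phi := fun z => phi (psi z).
have HPhic : continuous_on Z0 Phi.
  move=> z hz k. have [m1 h1] := HcontY _ (Hmap _ hz) k.
  have [m2 h2] := Hcont _ hz m1. exists m2 => z' hz' ha.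
  apply h1; [exact: Hmap | exact: h2].
have HPhicomm : forall z, Z0 z -> Phi (shift z) = shift (Phi z).
  move=> z hz. rewrite /Phi Hcomm // HcommY //. exact: Hmap.
have [m1 Hm1] := UC Hz0sp Hcont Hcomm.
have [m2 Hm2] := UC Hz0sp HPhic HPhicomm.
pose m := maxn m1 m2.
have Lpsi : local Z0 psi m by apply: (local_mono Hm1); apply leq_maxl.
have LPhi : local Z0 Phi m by apply: (local_mono Hm2); apply leq_maxr.
pose L := maxn (maxlen Fb) (2 * m + 1).
have hL1 : (maxlen Fb <= L)%N by apply leq_maxl.
have hL2 : (2 * m + 1 <= L)%N by apply leq_maxr.
have PhiZ : forall t z, Z0 z -> Phi (shiftZ t z) = shiftZ t (Phi z).
  move=> t z hz; exact: (comm_shiftZ (proj2 Hz0sp) HPhicomm).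
have psiZ : forall t z, Z0 z -> psi (shiftZ t z) = shiftZ t (psi z).
  move=> t z hz; exact: (comm_shiftZ (proj2 Hz0sp) Hcomm).
have [z0 [hz0 hz0x]] := Honto _ hx1.
have Pz0 : forall i, Phi z0 i = y i by move=> i; rewrite /Phi hz0x hxy.
set mZ := Z.of_nat m.
have WL1 : forall N N' q i, (N <= N')%N -> q - Z.of_nat N <= i <= q + mZ -> q - Z.of_nat N' <= i <= q + mZ.
  move=> N N' q i hN; have : (Z.of_nat N <= Z.of_nat N') by apply inj_le; apply/leP. lia.
have WL2 : forall N q t i, (q + t) - Z.of_nat N <= i <= (q + t) + mZ <-> q - Z.of_nat N <= i - t <= q + mZ.
  move=> N q t i; lia.
have WL3 : forall q i, i <= q + mZ -> exists N, q - Z.of_nat N <= i <= q + mZ.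
  move=> q i hi; exists (Z.to_nat (q - i)); lia.
have WR1 : forall N N' q i, (N <= N')%N -> q + mZ <= i <= q + mZ + Z.of_nat N -> q + mZ <= i <= q + mZ + Z.of_nat N'.
  move=> N N' q i hN; have : (Z.of_nat N <= Z.of_nat N') by apply inj_le; apply/leP. lia.
have WR2 : forall N q t i, (q + t) + mZ <= i <= (q + t) + mZ + Z.of_nat N <-> q + mZ <= i - t <= q + mZ + Z.of_nat N.
  move=> N q t i; lia.
have WR3 : forall q i, q + mZ <= i -> exists N, q + mZ <= i <= q + mZ + Z.of_nat N.
  move=> q i hi; exists (Z.to_nat (i - q - mZ)); lia.
have [N1 [q1 SL]] := @sync B C Z0 Phi y L m (fun N q i => q - Z.of_nat N <= i <= q + mZ)
   (fun q i => i <= q + mZ) Hz0sp LPhi PhiZ WL1 WL2 WL3.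
have [N2 [q2 SR]] := @sync B C Z0 Phi y L m (fun N q i => q + mZ <= i <= q + mZ + Z.of_nat N)
   (fun q i => q + mZ <= i) Hz0sp LPhi PhiZ WR1 WR2 WR3.
have [_ [t1 [ht1 Ht1]]] := dt_rec hy (q1 - Z.of_nat N1) (q1 + mZ) (- Z.abs n - mZ - q1).
have [[t2 [ht2 Ht2]] _] := dt_rec hy (q2 + mZ) (q2 + mZ + Z.of_nat N2) (Z.abs n - q2).
set q1' := q1 + t1. set q2' := q2 + t2.
have [[t [ht Ht]] _] := dt_rec hy (q1' - Z.of_nat N1) (q2' + mZ + Z.of_nat N2) T.
exists t; split => //.
set zt := shiftZ (-t) z0.
have hzt : Z0 zt by apply inv_shiftZ; [exact: (proj2 Hz0sp)|].
have Pzt : forall i, Phi zt i = y (i - t).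
  move=> i. rewrite /zt PhiZ // /shiftZ Pz0. f_equal; lia.
have yt : forall i, q1' - Z.of_nat N1 <= i - t <= q2' + mZ + Z.of_nat N2 -> y (i - t) = y i.
  move=> i hi. have := Ht _ hi. by rewrite Z.sub_add => ->.
have [w1 [hw1 [Pw1 Sw1]]] : SsetI Z0 Phi y L (fun q i => i <= q + mZ) (q1' + t) (st L z0 q1').
  apply SL.
  - move=> i /= hi. have e1 := Ht1 _ hi.
    have e2 := Ht (i + t1) ltac:(rewrite /q1'; lia).
    rewrite (_ : i + (q1' + t - q1) = i + t1 + t); last (rewrite /q1'; lia). by rewrite e2.
  - exists zt; split => //; split.
    + move=> i hi /=. rewrite Pzt. apply yt. lia.
    + by rewrite /zt st_shiftZ (_ : q1' + t + - t = q1'); last lia.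
have [w2 [hw2 [Pw2 Sw2]]] : SsetI Z0 Phi y L (fun q i => q + mZ <= i) (q2' + t) (st L z0 q2').
  apply SR.
  - move=> i /= hi. have e1 := Ht2 _ hi.
    have e2 := Ht (i + t2) ltac:(rewrite /q2'; lia).
    rewrite (_ : i + (q2' + t - q2) = i + t2 + t); last (rewrite /q2'; lia). by rewrite e2.
  - exists zt; split => //; split.
    + move=> i hi /=. rewrite Pzt. apply yt. lia.
    + by rewrite /zt st_shiftZ (_ : q2' + t + - t = q2'); last lia.
set g1 := q1' + t. set g2 := q2' + t.
have a1 : forall i, g1 <= i < g1 + Z.of_nat L -> w1 i = zt i.
  apply st_agree. by rewrite Sw1 /zt st_shiftZ (_ : g1 + - t = q1'); last (rewrite /g1; lia).
set s1 := splice w1 zt g1.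
have hs1 : Z0 s1 by apply: (splice_SFT HF hL1).
have a2 : forall i, g2 <= i < g2 + Z.of_nat L -> s1 i = w2 i.
  move=> i hi. rewrite /s1 /splice.
  case: (Z.ltb_spec i g1) => hig; first (rewrite /g1 /g2 /q1' /q2' in hig hi; lia).
  apply: (st_agree (L:=L) (z:=zt) (z':=w2) (q:=g2)) => //.
  by rewrite Sw2 /zt st_shiftZ (_ : g2 + - t = q2'); last (rewrite /g2; lia).
set s := splice s1 w2 g2.
have hs : Z0 s by apply: (splice_SFT HF hL1).
have hg12 : g1 <= g2 by rewrite /g1 /g2 /q1' /q2'; lia.
exists (psi s); split; first exact: Hmap.
split.
- apply functional_extensionality => i. change (Phi s i = y i).
  case: (Z.leb_spec i (g2 + mZ)) => hi2.
  + rewrite (splice_left (L:=L) LPhi hs hs1 hL2 a2 hi2).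
    case: (Z.leb_spec i (g1 + mZ)) => hi1.
    * rewrite (splice_left (L:=L) LPhi hs1 hw1 hL2 a1 hi1). apply Pw1. done.
    * rewrite (splice_right LPhi hs1 hzt (ltac:(lia) : g1 + mZ <= i)) Pzt. apply yt.
      rewrite /g1 /g2 in hi1 hi2. lia.
  + rewrite (splice_right LPhi hs hw2 (ltac:(lia) : g2 + mZ <= i)). apply Pw2. simpl. lia.
- move=> j hj.
  have hi2 : t + j <= g2 + mZ by rewrite /g2 /q2'; lia.
  have hi1 : g1 + mZ <= t + j by rewrite /g1 /q1'; lia.
  rewrite (splice_left (L:=L) Lpsi hs hs1 hL2 a2 hi2) (splice_right Lpsi hs1 hzt hi1).
  rewrite /zt psiZ // /shiftZ hz0x. f_equal; lia.
Qed.

Lemma bound_listZ (T : Type) (R : T -> Z -> Prop) (l : list T) :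
  (forall a, In a l -> exists B, forall j, B <= j -> ~ R a j) ->
  exists B, forall a, In a l -> forall j, B <= j -> ~ R a j.
Proof.
elim: l => [|a l IH] H. by exists 0.
have [Ba Ha] := H a (or_introl erefl).
have [Bl Hl] := IH (fun b hb => H b (or_intror hb)).
exists (Z.max Ba Bl) => b [<-|hb] j hj.
- apply Ha; lia.
- apply (Hl b hb); lia.
Qed.

Lemma twice (A : Type) (l : list (point A)) (P : point A -> Z -> Prop) (D : Z) :
  (forall T, exists t, T <= t /\ exists x', In x' l /\ P x' t) ->
  exists x' t t', In x' l /\ P x' t /\ P x' t' /\ t + D <= t'.
Proof.
move=> H. apply NNPP => Hn.
have H1 : forall a, In a l -> exists B, forall j, B <= j -> ~ P a j.
  move=> a ha. case: (classic (exists t0, P a t0)) => [[t0 h0]|hn].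
  - exists (t0 + D) => j hj hp. apply Hn; exists a, t0, j; split; [done | split; [done | split; [done | lia]]].
  - exists 0 => j _ hp; apply hn; by exists j.
have [B HB] := bound_listZ H1.
have [t [ht [x' [hx hp]]]] := H B.
exact: (HB x' hx t ht hp).
Qed.

Lemma REC2 (A B : finType) (X : pset A) (Y : pset B) (phi : point A -> point B) :
  sofic X -> factor_code X Y phi -> finite_to_one X phi ->
  forall y, doubly_transitive Y y -> forall x1, X x1 -> phi x1 = y ->
  forall n : Z, exists x' t t', X x' /\ phi x' = y /\ t + 2 * n + 1 <= t' /\
    forall j, -n <= j <= n -> x' (t + j) = x1 j /\ x' (t' + j) = x1 j.
Proof.
move=> hs hf hfin y hy x1 hx1 hxy n.
have [l Hl] := hfin y.
have := @twice A l (fun x' t => X x' /\ phi x' = y /\ forall j, -n <= j <= n -> x' (t + j) = x1 j)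
   (2 * n + 1).
case.
- move=> T. have [t [ht [x' [hx' [hxy' hj]]]]] := REC hs hf hy hx1 hxy n T.
  exists t; split => //; exists x'; split; [exact: Hl | by split].
- move=> x' [t [t' [_ [[hx [he h1]] [[_ [_ h2]] htt]]]]].
  exists x', t, t'; split; first done; split; first done; split; first lia.
  move=> j hj; split; [exact: h1 | exact: h2].
Qed.

Theorem lemma3p2 (A B : finType) (X : pset A) (Y : pset B)
  (phi : point A -> point B) :
  sofic X -> sofic Y -> irreducible Y ->
  factor_code X Y phi -> finite_to_one X phi ->
  forall y, doubly_transitive Y y ->
  forall x, X x -> phi x = y -> Omega X x.
Proof.
move=> hsX _ _ hf hfin y hy x hx hxy.
have [[[HXcl HXinv] _] _] := hf.
pose Z' := fun w : point A => forall N : nat, exists x' p, X x' /\ phi x' = y /\ agree_on w (shiftZ p x') N.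
exists Z'; split; [split|split; [|split]].
-
  move=> w hw N. have [w' [hw' ha]] := hw N. have [x' [p [hx' [he ha']]]] := hw' N.
  exists x', p; split => //; split => // i hi. rewrite (ha i hi). exact: ha' i hi.
-
  move=> w; split => hw N.
  + have [x' [p [hx' [he ha]]]] := hw N.+1. exists x', (p + 1); split => //; split => // i hi.
    rewrite /shift (ha (i + 1)); last (rewrite Nat2Z.inj_succ; lia). rewrite /shiftZ; f_equal; lia.
  + have [x' [p [hx' [he ha]]]] := hw N.+1. exists x', (p - 1); split => //; split => // i hi.
    have := ha (i - 1) ltac:(rewrite Nat2Z.inj_succ; lia). rewrite /shift /shiftZ.
    rewrite (_ : i - 1 + 1 = i); last lia. move=> ->. f_equal; lia.
-
  move=> w hw. apply HXcl => N. have [x' [p [hx' [he ha]]]] := hw N.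
  exists (shiftZ p x'); split => //. by apply inv_shiftZ.
-
  move=> u [w [i [hw hocc]]].
  have [x1 [p [hx1 [he1 ha1]]]] := hw (Z.to_nat (Z.abs i + Z.of_nat (size u))).
  have occ1 : forall k, (k < size u)%N -> x1 (i + p + Z.of_nat k) = nth (x1 0) u k.
    move=> k hk.
    have hk' : (Z.of_nat k < Z.of_nat (size u)) by apply inj_lt; apply/ltP.
    rewrite -(hocc k (x1 0) hk) (ha1 (i + Z.of_nat k)); last lia.
    rewrite /shiftZ; f_equal; lia.
  set n := Z.abs (i + p) + Z.of_nat (size u).
  have [x' [t [t' [hx' [he' [htt hj]]]]]] := REC2 hsX hf hfin hy hx1 he1 n.
  have occ2 : forall P, (P = t \/ P = t') -> forall k a, (k < size u)%N ->
      x' (P + (i + p) + Z.of_nat k) = nth a u k.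
    move=> P hP k a hk.
    have hk' : (Z.of_nat k < Z.of_nat (size u)) by apply inj_lt; apply/ltP.
    rewrite (set_nth_default (x1 0)) // -occ1 //.
    have hjj := hj (i + p + Z.of_nat k) ltac:(rewrite /n; lia).
    rewrite (_ : P + (i + p) + Z.of_nat k = P + (i + p + Z.of_nat k)); last lia.
    by case: hP => ->; case: hjj.
  set P1 := t + (i + p). set P2 := t' + (i + p).
  set su := Z.of_nat (size u).
  have hP : P1 + su <= P2 by rewrite /P1 /P2 /su; lia.
  pose v := [seq x' (P1 + su + Z.of_nat k) | k <- iota 0 (Z.to_nat (P2 - P1 - su))].
  have hsv : Z.of_nat (size v) = P2 - P1 - su by rewrite /v size_map size_iota Z2Nat.id; lia.
  exists v. exists x', P1; split.
  + move=> N; exists x', 0; split => //; split => // k hk. by rewrite /shiftZ Z.add_0_r.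
  + move=> k a hk. rewrite nth_cat. case: ifP => hk1.
    * exact: occ2 (or_introl erefl) k a hk1.
    * rewrite nth_cat. case: ifP => hk2.
      - rewrite /v (nth_map 0%N); last by rewrite size_map in hk2.
        rewrite nth_iota; last by rewrite size_map size_iota in hk2.
        rewrite add0n. f_equal. rewrite /su.
        have : (size u <= k)%N by rewrite leqNgt hk1.
        move/leP => h. rewrite Nat2Z.inj_sub //. lia.
      - have h1 : (size u <= k)%N by rewrite leqNgt hk1.
        have h2 : (size v <= k - size u)%N by rewrite leqNgt hk2.
        rewrite !size_cat in hk.
        have h3 : (k - size u - size v < size u)%N.
          move: hk h1 h2; generalize (size u) (size v) => a0 b0; lia.
        have := occ2 t' (or_intror erefl) _ a h3. rewrite -/P2 => <-. f_equal.
        move/leP: h1 => h1. move/leP: h2 => h2.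
        rewrite !Nat2Z.inj_sub //. rewrite /P2 in hsv. rewrite /P2. lia.
- move=> N; exists x, 0; split => //; split => // i hi. by rewrite /shiftZ Z.add_0_r.
Qed.
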